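(* Let $u^1:S\times B\to\mathbb{R}$ and let $y:S\to\Delta(B)$ be a one-to-one map such that $U^1(\mu_0,y)\ge U^1(\mu,y)$ for every $\mu\in\mathcal{M}$. Then every neighborhood of $u^1$ in $\mathbb{R}^{S\times B}$ contains a function $\tilde u^1:S\times B\to\mathbb{R}$ such that $\tilde U^1(\mu_0,y)>\tilde U^1(\mu,y)$ for every $\mu\in\mathcal{M}$ with $\mu\neq\mu_0$, where $\tilde U^1$ is computed with $\tilde u^1$ in place of $u^1$.
   Context: $S$ and $B$ are finite sets; messages are identified with states. $m\in\Delta(S)$ has full support. $\mathcal{M}$ is the set of probability distributions on $S\times S$ both of whose marginals equal $m$; $\mu_0(s,s)=m(s)$, $\mu_0(s,t)=0$ for $s\ne t$. With $u^1$ extended linearly to mixed actions, $U^1(\mu,y)=\sum_{s,a\in S}\mu(s,a)u^1(s,y(\cdot\mid a))$. *)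

(* Defs.v *)
From mathcomp Require Import all_boot all_order all_algebra.
From mathcomp Require Import reals.
Set Implicit Arguments. Unset Strict Implicit. Unset Printing Implicit Defensive.
Import Order.TTheory GRing.Theory Num.Theory.
Local Open Scope ring_scope.

Section Defs.
Variable R : realType.

Definition is_dist (T : finType) (p : {ffun T -> R}) : Prop :=
  (forall t, 0 <= p t) /\ \sum_t p t = 1.

Definition in_M (S : finType) (m : {ffun S -> R}) (mu : {ffun S * S -> R}) : Prop :=
  is_dist mu /\
  (forall s, \sum_(a : S) mu (s, a) = m s) /\
  (forall a, \sum_(s : S) mu (s, a) = m a).

Definition mu0 (S : finType) (m : {ffun S -> R}) : {ffun S * S -> R} :=
  [ffun p => if p.1 == p.2 then m p.1 else 0].

Definition u_mixed (S B : finType) (u : {ffun S * B -> R}) (s : S)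
    (q : {ffun B -> R}) : R :=
  \sum_(b : B) q b * u (s, b).

Definition U1 (S B : finType) (u : {ffun S * B -> R}) (mu : {ffun S * S -> R})
    (y : S -> {ffun B -> R}) : R :=
  \sum_(s : S) \sum_(a : S) mu (s, a) * u_mixed u s (y a).

End Defs.

(* Main.v *)
Require Import Defs.
From mathcomp Require Import all_boot all_order all_algebra.
From mathcomp Require Import reals.
From mathcomp Require Import ring lra.
Import Order.TTheory GRing.Theory Num.Theory.
Local Open Scope ring_scope.

Lemma U1_lin (R : realType) (S B : finType) (u v : {ffun S * B -> R}) (d : R)
  mu (y : S -> {ffun B -> R}) :
  U1 [ffun p => u p + d * v p] mu y = U1 u mu y + d * U1 v mu y.
Proof.
rewrite /U1 mulr_sumr -big_split /=; apply: eq_bigr => s _.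
rewrite mulr_sumr -big_split /=; apply: eq_bigr => a _.
rewrite /u_mixed.
have -> : \sum_b y a b * [ffun p => u p + d * v p] (s, b) =
  \sum_b y a b * u (s, b) + d * \sum_b y a b * v (s, b).
  rewrite mulr_sumr -big_split /=; apply: eq_bigr => b _; rewrite ffunE.
  by rewrite mulrDr mulrCA.
by rewrite mulrDr mulrCA.
Qed.

Lemma keyU (R : realType) (S B : finType) (m : {ffun S -> R}) mu
  (y : S -> {ffun B -> R}) (hM : in_M m mu) :
  let v := [ffun p : S * B => y p.1 p.2] in
  2 * (U1 v (mu0 m) y - U1 v mu y) =
  \sum_s \sum_a mu (s, a) * \sum_b (y s b - y a b) ^+ 2.
Proof.
move=> v; case: hM => _ [h1 h2].
set Q := fun s => \sum_b y s b ^+ 2.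
have E0 : U1 v (mu0 m) y = \sum_s m s * Q s.
  rewrite /U1; apply: eq_bigr => s _.
  rewrite (bigD1 s) //= big1 ?addr0; last first.
    by move=> a /negPf ha; rewrite ffunE /= eq_sym ha mul0r.
  rewrite ffunE /= eqxx /u_mixed /Q; congr (_ * _); apply: eq_bigr => b _.
  by rewrite ffunE /= expr2.
have E1 : \sum_s \sum_a mu (s, a) * \sum_b (y s b - y a b) ^+ 2 =
  \sum_s \sum_a mu (s, a) * Q s + \sum_s \sum_a mu (s, a) * Q a
  - 2 * U1 v mu y.
  rewrite /U1 mulr_sumr -big_split -sumrB; apply: eq_bigr => s _.
  rewrite mulr_sumr -big_split -sumrB; apply: eq_bigr => a _.
  have -> : \sum_b (y s b - y a b) ^+ 2 =
    Q s + Q a - 2 * u_mixed v s (y a).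
    rewrite /Q /u_mixed mulr_sumr -big_split -sumrB; apply: eq_bigr => b _.
    rewrite ffunE /=; ring.
  rewrite /=; ring.
have E2 : \sum_s \sum_a mu (s, a) * Q s = \sum_s m s * Q s.
  by apply: eq_bigr => s _; rewrite -mulr_suml h1.
have E3 : \sum_s \sum_a mu (s, a) * Q a = \sum_s m s * Q s.
  by rewrite exchange_big; apply: eq_bigr => a _; rewrite -mulr_suml h2.
rewrite E1 E2 E3 E0; ring.
Qed.

Lemma offdiag (R : realType) (S : finType) (m : {ffun S -> R}) mu
  (hM : in_M m mu) : mu <> mu0 m ->
  exists s a, s != a /\ 0 < mu (s, a).
Proof.
move=> hne; case: (boolP [exists p : S * S, (p.1 != p.2) && (0 < mu p)]).
  by case/existsP => -[s a] /andP [h1 h2]; exists s, a.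
move=> hn; exfalso; apply: hne.
case: hM => -[hpos _] [h1 _].
have z : forall s a, s != a -> mu (s, a) = 0.
  move=> s a hsa; apply/eqP; rewrite eq_le hpos andbT leNgt; apply/negP => h.
  by move/negP: hn; apply; apply/existsP; exists (s, a); rewrite /= hsa h.
apply/ffunP => -[s a]; rewrite ffunE /=.
case: eqP => [<-|/eqP hsa]; last by rewrite z.
rewrite -h1 (bigD1 s) //= big1 ?addr0 //.
by move=> b hb; rewrite z // eq_sym.
Qed.

Theorem lemma13 (R : realType) (S B : finType)
    (m : {ffun S -> R}) (hm : is_dist m) (hfull : forall s, 0 < m s)
    (u : {ffun S * B -> R}) (y : S -> {ffun B -> R})
    (hy : forall s, is_dist (y s)) (hinj : injective y)
    (hopt : forall mu, in_M m mu -> U1 u mu y <= U1 u (mu0 m) y) :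
  forall eps : R, 0 < eps ->
  exists ut : {ffun S * B -> R},
    (forall p, `|ut p - u p| < eps) /\
    (forall mu, in_M m mu -> mu <> mu0 m -> U1 ut mu y < U1 ut (mu0 m) y).
Proof.
move=> eps heps.
set v := [ffun p : S * B => y p.1 p.2].
set d := eps / 2.
have hd : 0 < d by rewrite divr_gt0.
exists [ffun p => u p + d * v p]; split.
  move=> [s b]; rewrite !ffunE /= addrC addKr.
  case: (hy s) => hp hs.
  have hle : y s b <= 1.
    by rewrite -hs (bigD1 b) //= lerDl sumr_ge0.
  rewrite normrM (gtr0_norm hd) ger0_norm //.
  apply: (le_lt_trans (y := d)); first by rewrite -[X in _ <= X]mulr1 ler_wpM2l // ltW.
  by rewrite /d ltr_pdivrMr // ltr_pMr // ltr1n.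
move=> mu hM hne.
rewrite !U1_lin.
apply: (le_lt_trans (y := U1 u (mu0 m) y + d * U1 v mu y)).
  by rewrite lerD2r hopt.
rewrite ltrD2l ltr_pM2l //.
rewrite -subr_gt0 -(pmulr_rgt0 _ (ltr0n R 2)).
rewrite (@keyU R S B m mu y hM).
case: (@offdiag R S m mu hM hne) => s [a [hsa hpos]].
have hD : 0 < \sum_b (y s b - y a b) ^+ 2.
  have [b hb] : exists b, y s b != y a b.
    case: (boolP [exists b, y s b != y a b]); first by case/existsP => b hb; exists b.
    move=> hn; exfalso; move/negP: hsa; apply; apply/eqP; apply: hinj.
    apply/ffunP => b; apply/eqP; move: hn; apply: contraR => hb.
    by apply/existsP; exists b.
  rewrite (bigD1 b) //=; apply: ltr_pwDl; last by apply: sumr_ge0 => i _; exact: sqr_ge0.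
  by rewrite exprn_even_gt0 //= subr_eq0.
have hge : forall s' a', 0 <= mu (s', a') * \sum_b (y s' b - y a' b) ^+ 2.
  move=> s' a'; case: hM => -[hp _] _; apply: mulr_ge0 => //.
  by apply: sumr_ge0 => i _; exact: sqr_ge0.
rewrite pair_big /= (bigD1 (s, a)) //=; apply: ltr_pwDl.
  by apply: mulr_gt0.
by apply: sumr_ge0 => p _; apply: hge.
Qed.
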